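(* Consider the $T$-round online first-price auction problem described in the context. For any $V_T\in\left[\frac{36}{T},\frac{T}{4}\right]$, \[ \inf_{\pi\in\Pi}\ \sup_{(v_t,m_t)_{t=1}^T\in\mathcal{V}}\mathbb{E}[\mathrm{DR}_T(\pi)]\ge\frac{\sqrt{TV_T}}{16}. \]
   Context: Online first-price auction over $T$ rounds: at each round $t$ the learner observes a private value $v_t\in[0,1]$, submits a bid $b_t\in[0,1]$, then observes $m_t\in[0,1]$, the highest bid of the other bidders, and receives reward $r(b_t;v_t,m_t)$ with $r(b;v,m)\coloneqq(v-b)\mathbbm{1}(b\ge m)$. An admissible policy $\pi\in\Pi$ is a sequence of measurable functions $\pi_t$ with $b_t=\pi_t((v_s,m_s)_{s=1}^{t-1},v_t,U)$, where $U$ is the learner's internal random variable. The expected dynamic regret is $\mathbb{E}[\mathrm{DR}_T(\pi)]\coloneqq\sum_{t=1}^T\max\{v_t-m_t,0\}-\sum_{t=1}^T\mathbb{E}[r(b_t;v_t,m_t)]$. $\mathcal{V}\coloneqq\{(v_t,m_t)_{t=1}^T\in[0,1]^{2T}:\sum_{t=2}^T|m_t-m_{t-1}|\le V_T\}$. *)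

(* Defs.v *)
From HB Require Import structures.
From mathcomp Require Import all_boot all_order all_algebra.
From mathcomp Require Import all_classical all_reals all_analysis.
Set Implicit Arguments. Unset Strict Implicit. Unset Printing Implicit Defensive.
Import Order.TTheory GRing.Theory Num.Theory.
Local Open Scope classical_set_scope.
Local Open Scope ring_scope.

Section Auction.
Context {R : realType}.

Definition reward (b v m : R) : R := (v - b) * (((m <= b)%R : bool) : nat)%:R.

(* Rounds are indexed 0, ..., T-1 (paper: 1, ..., T).
   history v m t = (v_s, m_s) for the rounds s strictly before t. *)
Definition history (v m : nat -> R) (t : nat) : seq (R * R) :=
  [seq (v s, m s) | s <- iota 0 t].

(* A policy: pi t (past observations) v_t U  is the bid b_t;
   U is the learner's internal randomness, an element of a probability
   space Omega. *)
Definition policy (Omega : Type) := nat -> seq (R * R) -> R -> Omega -> R.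

Definition bid {Omega} (pi : policy Omega) (v m : nat -> R) (t : nat) (w : Omega) : R :=
  pi t (history v m t) (v t) w.

Definition admissible {d} {Omega : measurableType d} (pi : policy Omega) : Prop :=
  forall t h x, measurable_fun setT (pi t h x) /\
                (forall w, 0 <= pi t h x w <= 1).

Definition exp_dyn_regret {d} {Omega : measurableType d}
  (P : probability Omega R) (T : nat) (pi : policy Omega) (v m : nat -> R) : \bar R :=
  ((\sum_(t < T) Num.max (v t - m t) 0)%:E -
   \sum_(t < T) \int[P]_w (reward (bid pi v m t w) (v t) (m t))%:E)%E.

Definition in_V (T : nat) (VT : R) (v m : nat -> R) : Prop :=
  (forall t, (t < T)%N -> 0 <= v t <= 1 /\ 0 <= m t <= 1) /\
  \sum_(1 <= t < T) `|m t - m t.-1| <= VT.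

End Auction.

(* Main.v *)
Require Import Defs.
From HB Require Import structures.
From mathcomp Require Import all_boot all_order all_algebra.
From mathcomp Require Import all_classical all_reals all_analysis.
From mathcomp Require Import measurable_realfun.
From mathcomp Require Import lra.
Import Order.TTheory GRing.Theory Num.Theory.
Local Open Scope classical_set_scope.
Local Open Scope ring_scope.

Lemma int_bound (R : realType) (d : measure_display) (Omega : measurableType d)
  (P : probability Omega R) (f : Omega -> R) (A : set Omega) (a c : R) :
  measurable A -> measurable_fun setT f -> (forall w, 0 <= f w) -> 0 <= a -> 0 <= c ->
  (forall w, A w -> f w <= a) -> (forall w, ~ A w -> f w <= c) ->
  (\int[P]_w (f w)%:E <= (a * fine (P A) + c * (1 - fine (P A)))%:E)%E.
Proof.
move=> mA mf f0 a0 c0 fa fc.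
have mfE : measurable_fun [set: Omega] (EFin \o f) by exact/measurable_EFinP.
rewrite -(setUv A) ge0_integral_setU //; last 4 first.
- exact: measurableC.
- by rewrite setUv.
- by move=> w _; rewrite lee_fin.
- by rewrite disj_set2E setICr.
rewrite EFinD; apply: leeD.
  apply: (@le_trans _ _ (\int[P]_(w in A) (cst a%:E) w)%E).
    apply: ge0_le_integral => //.
    - by move=> w _; rewrite lee_fin.
    - exact: (measurable_funS measurableT (@subsetT _ _) mfE).
  by rewrite integral_cst // EFinM fineK // fin_num_measure.
apply: (@le_trans _ _ (\int[P]_(w in ~` A) (cst c%:E) w)%E).
  apply: ge0_le_integral => //.
  - exact: measurableC.
  - by move=> w _; rewrite lee_fin.
  - exact: (measurable_funS measurableT (@subsetT _ _) mfE).
rewrite integral_cst //; last exact: measurableC.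
rewrite [X in (_ * X <= _)%E](probability_setC P mA).
rewrite EFinM EFinB fineK // ?fin_num_measure //.
Qed.

Lemma round_bound (R : realType) (d : measure_display) (Omega : measurableType d)
  (P : probability Omega R) (g : Omega -> R) (m del : R) :
  measurable_fun setT g -> (forall w, 0 <= g w <= 1) -> 0 < del <= 1/2 ->
  m = 0 \/ m = del ->
  let A := [set w | del <= g w] in
  let I := (\int[P]_w (reward (g w) 1 m)%:E)%E in
  [/\ I = (fine I)%:E,
      fine I <= (1 - del) * fine (P A) + (if m == 0 then 1 else 0) * (1 - fine (P A)),
      0 <= fine (P A) <= 1 & measurable A].
Proof.
move=> mg gb /andP[d0 d1] hm A I.
have mA : measurable A.
  have := mg measurableT `[del, +oo[%classic (measurable_itv _).
  rewrite setTI; congr measurable; apply/seteqP; split => w /=;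
    by rewrite /A /= in_itv /= andbT.
have ind w : reward (g w) 1 m = (1 - g w) * \1_[set w | m <= g w] w.
  rewrite /reward indicE; case: (boolP (m <= g w)) => h.
    by rewrite mem_set.
  by rewrite memNset //= => h'; rewrite h' in h.
have mf : measurable_fun setT (fun w => reward (g w) 1 m).
  under eq_fun do rewrite ind.
  apply: measurable_funM; first exact: measurable_funB.
  apply: measurable_indic.
  have := mg measurableT `[m, +oo[%classic (measurable_itv _).
  rewrite setTI; congr measurable; apply/seteqP; split => w /=;
    by rewrite in_itv /= andbT.
have f0 w : 0 <= reward (g w) 1 m.
  rewrite ind indicE; have := gb w; case/andP => g0 g1.
  by apply: mulr_ge0; [rewrite subr_ge0 | exact: ler0n].
have PA : P A = (fine (P A))%:E by rewrite fineK // fin_num_measure.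
have hPA : 0 <= fine (P A) <= 1.
  rewrite -!lee_fin -PA measure_ge0 /=.
  exact: probability_le1.
have hb := @int_bound R d Omega P (fun w => reward (g w) 1 m) A (1 - del)
  (if m == 0 then 1 else 0) mA mf f0.
have I0 : (0 <= I)%E by apply: integral_ge0 => w _; rewrite lee_fin.
have hI : (I <= ((1 - del) * fine (P A) + (if m == 0 then 1 else 0) * (1 - fine (P A)))%:E)%E.
  apply: hb.
  - by rewrite subr_ge0 (le_trans d1) // ler_pdivrMr // mul1r ler1n.
  - by case: ifP.
  - move=> w Aw; rewrite ind indicE; have := gb w; case/andP => g0 g1.
    apply: (le_trans (y := 1 - g w)).
      rewrite -[leRHS]mulr1; apply: ler_wpM2l; first by rewrite subr_ge0.
      by case: (_ \in _).
    by rewrite lerB.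
  - move=> w nA; rewrite ind indicE; have := gb w; case/andP => g0 g1.
    have gd : g w < del by rewrite ltNge; apply/negP => h; apply: nA.
    case: hm => ->; rewrite ?eqxx.
      rewrite -[leRHS]mulr1; apply: (le_trans (y := 1 - g w)).
        rewrite -[leRHS]mulr1; apply: ler_wpM2l; first by rewrite subr_ge0.
        by case: (_ \in _).
      by rewrite mulr1 lerBlDr lerDl.
    by rewrite (gt_eqF d0) memNset ?mulr0 //= => h; move: gd; rewrite ltNge h.
have Ifin : I \is a fin_num.
  by rewrite ge0_fin_numE // (le_lt_trans hI) // ltry.
split => //; first by rewrite fineK.
by rewrite -lee_fin fineK.
Qed.
Definition hist_of {R : realType} (l : seq R) : seq (R * R) := [seq (1, x) | x <- l].
Definition cnt {R : realType} (l : seq R) : nat := count (fun x => x != 0) l.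
Definition qq {R : realType} {d : measure_display} {Omega : measurableType d}
  (P : probability Omega R) (pi : policy Omega) (del : R) (t : nat) (l : seq R) : R :=
  fine (P [set w | del <= pi t (hist_of l) 1 w]).
Definition step {R : realType} {d : measure_display} {Omega : measurableType d}
  (P : probability Omega R) (pi : policy Omega) (del VT : R) (t : nat) (l : seq R) : R :=
  if (qq P pi del t l <= 1/2) && (2 * del * (cnt l).+1%:R <= VT) then del else 0.
Fixpoint ms {R : realType} {d : measure_display} {Omega : measurableType d}
  (P : probability Omega R) (pi : policy Omega) (del VT : R) (n : nat) : seq R :=
  match n with 0 => [::] | n'.+1 => rcons (ms P pi del VT n') (step P pi del VT n' (ms P pi del VT n')) end.
Definition mm {R : realType} {d : measure_display} {Omega : measurableType d}
  (P : probability Omega R) (pi : policy Omega) (del VT : R) (t : nat) : R :=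
  step P pi del VT t (ms P pi del VT t).

Lemma ms_map {R : realType} {d : measure_display} {Omega : measurableType d}
  (P : probability Omega R) (pi : policy Omega) (del VT : R) n :
  ms P pi del VT n = [seq mm P pi del VT s | s <- iota 0 n].
Proof.
elim: n => [//|n IH].
rewrite -addn1 iotaD map_cat -IH cats1 addn1 add0n.
reflexivity.
Qed.

Lemma hist_mm {R : realType} {d : measure_display} {Omega : measurableType d}
  (P : probability Omega R) (pi : policy Omega) (del VT : R) t :
  history (fun=> 1) (mm P pi del VT) t = hist_of (ms P pi del VT t).
Proof. by rewrite /history ms_map /hist_of -map_comp. Qed.

Lemma cnt_S {R : realType} {d : measure_display} {Omega : measurableType d}
  (P : probability Omega R) (pi : policy Omega) (del VT : R) n :
  cnt (ms P pi del VT n.+1) = (cnt (ms P pi del VT n) + (mm P pi del VT n != 0%R))%N.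
Proof. by rewrite /= /cnt -cats1 count_cat /= addn0. Qed.

Lemma cnt_sum {R : realType} {d : measure_display} {Omega : measurableType d}
  (P : probability Omega R) (pi : policy Omega) (del VT : R) n :
  (cnt (ms P pi del VT n))%:R = \sum_(t < n) ((mm P pi del VT t != 0)%:R : R).
Proof.
elim: n => [|n IH]; first by rewrite big_ord0.
by rewrite cnt_S natrD IH big_ord_recr.
Qed.

Lemma cnt_mono {R : realType} {d : measure_display} {Omega : measurableType d}
  (P : probability Omega R) (pi : policy Omega) (del VT : R) n k :
  (n <= k)%N -> (cnt (ms P pi del VT n) <= cnt (ms P pi del VT k))%N.
Proof.
move=> /subnK <-; elim: (k - n)%N => [//|j IH].
by rewrite addSn cnt_S (leq_trans IH) // leq_addr.
Qed.

Lemma mm_cases {R : realType} {d : measure_display} {Omega : measurableType d}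
  (P : probability Omega R) (pi : policy Omega) (del VT : R) t :
  (mm P pi del VT t = del /\ qq P pi del t (ms P pi del VT t) <= 1/2 /\
     2 * del * (cnt (ms P pi del VT t)).+1%:R <= VT) \/
  (mm P pi del VT t = 0 /\ ~ (qq P pi del t (ms P pi del VT t) <= 1/2 /\
     2 * del * (cnt (ms P pi del VT t)).+1%:R <= VT)).
Proof.
rewrite /mm /step; case: ifP => [/andP[h1 h2]|h]; first by left.
by right; split => // -[h1 h2]; rewrite h1 h2 in h.
Qed.

Lemma budget {R : realType} {d : measure_display} {Omega : measurableType d}
  (P : probability Omega R) (pi : policy Omega) (del VT : R) n :
  0 < del -> 0 <= VT -> 2 * del * (cnt (ms P pi del VT n))%:R <= VT.
Proof.
move=> d0 V0; elim: n => [|n IH]; first by rewrite /= /cnt /= mulr0.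
rewrite cnt_S; case: (mm_cases P pi del VT n) => [[-> [_ h]]|[-> _]].
  by rewrite (gt_eqF d0) addn1.
by rewrite eqxx addn0.
Qed.

Lemma variation {R : realType} {d : measure_display} {Omega : measurableType d}
  (P : probability Omega R) (pi : policy Omega) (del VT : R) n :
  0 < del ->
  \sum_(1 <= t < n.+1) `|mm P pi del VT t - mm P pi del VT t.-1| +
    del * (mm P pi del VT n != 0)%:R <= 2 * del * (cnt (ms P pi del VT n.+1))%:R.
Proof.
move=> d0.
have hc t : mm P pi del VT t = 0 \/ mm P pi del VT t = del.
  by case: (mm_cases P pi del VT t) => [[->]|[->]]; [right|left].
elim: n => [|n IH].
  rewrite big_geq // add0r cnt_S /= /cnt /= add0n.
  by case: (_ != 0) => /=; rewrite ?mulr1 ?mulr0 ?ler_peMl ?ler1n // ltW.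
rewrite big_nat_recr //= cnt_S natrD mulrDr.
apply: (le_trans _ (lerD IH (lexx _))) => /=.
rewrite -!addrA lerD2l.
case: (hc n) => ->; case: (hc n.+1) => ->;
  rewrite ?subrr ?normr0 ?eqxx ?(gt_eqF d0) /= ?mulr0 ?mulr1 ?addr0 ?add0r ?subr0 ?sub0r ?normrN ?gtr0_norm //.
- by rewrite mulr2n mulrDl mul1r.
- by rewrite lerDl mulr_ge0 // ltW.
Qed.

Theorem theorem4 (R : realType) (d : measure_display) (Omega : measurableType d)
  (P : probability Omega R) (T : nat) (VT : R) :
  (0 < T)%N ->
  36 / T%:R <= VT -> VT <= T%:R / 4 ->
  forall pi : policy Omega, admissible pi ->
  ((Num.sqrt (T%:R * VT) / 16)%:E <=
   ereal_sup [set x | exists v m : nat -> R, in_V T VT v m /\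
                        x = exp_dyn_regret P T pi v m])%E.
Proof.
move=> T0 hV1 hV2 pi adm.
have Tp : 0 < T%:R :> R by rewrite ltr0n.
have TV36 : 36 <= T%:R * VT by rewrite mulrC -ler_pdivrMr.
have VT0 : 0 < VT.
  by apply: lt_le_trans hV1; rewrite divr_gt0 // ltr0n.
set s := Num.sqrt (T%:R * VT).
have ss : s * s = T%:R * VT by rewrite -expr2 sqr_sqrtr // ltW // mulr_gt0.
have s0 : 0 <= s by exact: sqrtr_ge0.
have s6 : 6 <= s by nra.
have sT : s <= T%:R / 2 by nra.
set del := s / (8 * T%:R).
have del8 : del * (8 * T%:R) = s by rewrite /del divfK // mulf_neq0 // gt_eqF.
have d0 : 0 < del by nra.
have d1 : del <= 1/2 by nra.
set v := fun _ : nat => (1 : R).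
set m := mm P pi del VT.
apply: (le_trans _ (ereal_sup_ubound _)); last first.
  exists v, m; split; last reflexivity.
  split.
    move=> t _; split; first by rewrite /v ler01 lexx.
    rewrite /m; by case: (mm_cases P pi del VT t) => [[-> _]|[-> _]]; rewrite ?lexx ?ler01 // ltW //= (le_trans d1) // ler_pdivrMr // mul1r ler1n.
  have [n eT] : exists n, T = n.+1 by exists T.-1; rewrite prednK.
  rewrite eT /m.
  apply: le_trans (budget P pi del VT n.+1 d0 (ltW VT0)).
  apply: le_trans (variation P pi del VT n d0).
  by rewrite lerDl mulr_ge0 // ltW.
set rt := fun t => fine (\int[P]_w (reward (bid pi v m t w) (v t) (m t))%:E)%E.
set loss := fun t => Num.max (v t - m t) 0 - rt t.
have L t : [/\ (\int[P]_w (reward (bid pi v m t w) (v t) (m t))%:E)%E = (rt t)%:E,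
   0 <= loss t, (m t != 0 -> 1/4 <= loss t) &
   (2 * del * (cnt (ms P pi del VT t)).+1%:R <= VT -> del / 2 <= loss t)].
  pose g := pi t (hist_of (ms P pi del VT t)) 1.
  have eI : (\int[P]_w (reward (bid pi v m t w) (v t) (m t))%:E)%E =
            (\int[P]_w (reward (g w) 1 (m t))%:E)%E.
    by rewrite /bid /m hist_mm.
  have [mg gb] := adm t (hist_of (ms P pi del VT t)) 1.
  have dd : 0 < del <= 1/2 by rewrite d0 d1.
  have hm : m t = 0 \/ m t = del.
    by rewrite /m; case: (mm_cases P pi del VT t) => [[-> _]|[-> _]]; [right|left].
  have [hI hr hq mA] := @round_bound _ _ _ P _ _ _ mg gb dd hm.
  rewrite /loss /rt eI /v /g.
  move: hI hr hq; rewrite /m.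
  case: (mm_cases P pi del VT t) => [[-> [hq1 hb]]|[-> hn]].
    rewrite (gt_eqF d0) mul0r addr0 => hI hr /andP[q0 q1].
    have -> : Num.max (1 - del) 0 = 1 - del by apply/max_idPl; rewrite subr_ge0 (le_trans d1) // ler_pdivrMr // mul1r ler1n.
    rewrite /qq in hq1.
    split; [exact: hI | nra | move=> _; nra | move=> _; nra].
  rewrite eqxx mul1r subr0 => hI hr /andP[q0 q1].
  have -> : Num.max 1 0 = 1 :> R by apply/max_idPl; rewrite ler01.
  split; [exact: hI | nra | by rewrite ?eqxx | ].
  move=> hb.
  have hq : 1/2 < qq P pi del t (ms P pi del VT t).
    by rewrite ltNge; apply/negP => h; apply: hn.
  rewrite /qq in hq.
  nra.
rewrite /exp_dyn_regret.
rewrite (eq_bigr (fun t : 'I_T => (rt t)%:E)); last by move=> t _; case: (L t).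
rewrite sumEFin -EFinB -sumrB lee_fin.
have Lsum : \sum_(i < T) (Num.max (v i - m i) 0 - rt i) = \sum_(i < T) loss i by [].
rewrite Lsum.
case: (boolP (2 * del * (cnt (ms P pi del VT T)).+1%:R <= VT)) => hB.
  have LB (i : 'I_T) : true -> del / 2 <= loss i.
    move=> _; case: (L i) => _ _ _; apply; apply: le_trans hB.
    apply: ler_wpM2l; first by rewrite mulr_ge0 // ltW.
    by rewrite ler_nat ltnS cnt_mono // ltnW.
  apply: le_trans (ler_sum _ LB).
  rewrite sumr_const card_ord -mulr_natr.
  nra.
have LB (i : 'I_T) : true -> 1/4 * (m i != 0)%:R <= loss i.
  move=> _; case: (L i) => _ h0 h1 _.
  by case: (boolP (m i != 0)) => h; rewrite ?mulr1 ?mulr0 // h1.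
apply: le_trans (ler_sum _ LB).
rewrite -mulr_sumr -(cnt_sum P pi del VT T).
move: hB; rewrite -ltNge.
set c := (cnt (ms P pi del VT T)).
rewrite -natr1 => hB.
have : s * (c%:R + 1) > 4 * (s * s) by nra.
move=> h.
have : c%:R + 1 > 4 * s :> R.
  rewrite ltNge; apply/negP => h'.
  nra.
nra.
Qed.
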